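(* Let $\varphi_o$ be a $G_2$-structure on an oriented $7$-manifold with metric $g_o$ (components $g_{ij}$, inverse $g^{ij}$, in a local frame) and Hodge star $*_o$, let $w=w^ie_i$ be a vector field, and let $\tilde\varphi = \varphi_o + w\lrcorner *_o\varphi_o$ with metric $\tilde g$. Then the metric of $\tilde\varphi$ on $1$-forms is \[ \tilde g^{ij} = \frac{1}{(1+|w|_o^2)^{1/3}}\left(g^{ij} + w^iw^j\right). \]
   Context: A $G_2$-structure on an oriented $7$-manifold $M$ is a $3$-form $\varphi$ such that at each point $p$ there are local coordinates $x^1,\dots,x^7$ with $\varphi_p = dx^{123} - dx^{167} - dx^{527} - dx^{563} + dx^{415} + dx^{426} + dx^{437}$. It determines a Riemannian metric $g$ (equal to $\sum_k dx^k\otimes dx^k$ at $p$), a volume form and Hodge star, with $g(u,v)\,\mathrm{vol} = \frac16 (u\lrcorner\varphi)\wedge(v\lrcorner\varphi)\wedge\varphi$. $\tilde g^{ij}$ denotes the inverse matrix of $\tilde g_{ij}$. *)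

(* Defs.v *)
(* Pointwise linear algebra at one point p,
   in the coordinates of an arbitrary local frame e_1..e_7 of T_pM. *)
From HB Require Import structures.
From mathcomp Require Import all_boot all_order all_algebra.
From mathcomp Require Import reals exp.
Set Implicit Arguments. Unset Strict Implicit. Unset Printing Implicit Defensive.
Import Order.TTheory GRing.Theory Num.Theory.
Local Open Scope ring_scope.

Section G2.
Variable R : realType.

Definition vec := 'cV[R]_7.
Definition form3 := vec -> vec -> vec -> R.
Definition form4 := vec -> vec -> vec -> vec -> R.

Definition ix (k : nat) : 'I_7 := inord k.-1.

(* (dx^p /\ dx^q /\ dx^r)(u,v,w) in the coordinates x *)
Definition wedge3 (p q r : 'I_7) (u v w : vec) : R :=
  \det (\matrix_(i < 3, j < 3)
          (nth 0 [:: u; v; w] j) (nth ord0 [:: p; q; r] i) ord0).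

Definition d3 (a b c : nat) : vec -> vec -> vec -> R := wedge3 (ix a) (ix b) (ix c).

Definition phi_std : form3 := fun u v w =>
  d3 1 2 3 u v w - d3 1 6 7 u v w - d3 5 2 7 u v w - d3 5 6 3 u v w
  + d3 4 1 5 u v w + d3 4 2 6 u v w + d3 4 3 7 u v w.

(* P (invertible) expresses the coordinates x^1..x^7 at p in terms of the frame:
   x(u) = P u.  P is adapted to phi iff phi_p is the standard form in x. *)
Definition adapted (phi : form3) (P : 'M[R]_7) : Prop :=
  P \in unitmx /\ forall u v w, phi u v w = phi_std (P *m u) (P *m v) (P *m w).

Definition is_G2 (phi : form3) : Prop := exists P, adapted phi P.

(* metric g_ij in the frame: g(u,v) = (Pu).(Pv), i.e. matrix P^T P *)
Definition metric_mx (P : 'M[R]_7) : 'M[R]_7 := P^T *m P.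

Definition eps7 (t : 7.-tuple 'I_7) : R :=
  \det (\matrix_(r < 7, c < 7) ((tnth t r == c)%:R : R)).

(* Hodge star of a 3-form, computed in the oriented orthonormal coordinates x
   given by an adapted P (orientation = the one induced by phi):
   ( *al)_{d1d2d3d4} = 1/3! sum_{abc} al_{abc} eps_{abc d1d2d3d4}. *)
Definition hodge3 (P : 'M[R]_7) (al : form3) : form4 := fun u1 u2 u3 u4 =>
  let Q := invmx P in
  let ax (a b c : 'I_7) := al (Q *m delta_mx a ord0) (Q *m delta_mx b ord0)
                               (Q *m delta_mx c ord0) in
  \sum_(d1 < 7) \sum_(d2 < 7) \sum_(d3 < 7) \sum_(d4 < 7)
    ((6%:R)^-1 * \sum_(a < 7) \sum_(b < 7) \sum_(c < 7)
        ax a b c * eps7 [tuple a; b; c; d1; d2; d3; d4])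
    * (P *m u1) d1 ord0 * (P *m u2) d2 ord0 * (P *m u3) d3 ord0 * (P *m u4) d4 ord0.

Definition contr4 (w : vec) (psi : form4) : form3 := fun u v x => psi w u v x.

Definition add3 (a b : form3) : form3 := fun u v x => a u v x + b u v x.

End G2.

(* Main.v *)
Require Import Defs.
From HB Require Import structures.
From mathcomp Require Import all_boot all_order all_algebra.
From mathcomp Require Import reals exp.
From mathcomp Require Import ring lra.
Set Implicit Arguments. Unset Strict Implicit. Unset Printing Implicit Defensive.
Import Order.TTheory GRing.Theory Num.Theory.
Local Open Scope ring_scope.

Section S.
Variable R : comNzRingType.
Lemma det2E (A : 'M[R]_2) : \det A = A 0 0 * A 1 1 - A 0 1 * A 1 0.
Proof.
rewrite (expand_det_row _ 0) !big_ord_recr big_ord0 /= /cofactor !det_mx11 !mxE.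
set a := fun i j : nat => A (inord i) (inord j).
have aE : forall i j, A i j = a i j by move=> i j; rewrite /a !inord_val.
rewrite !aE /=. rewrite /a. 
have e0 : (inord 0 : 'I_2) = 0 by apply: val_inj; rewrite /= inordK.
have e1 : (inord 1 : 'I_2) = 1 by apply: val_inj; rewrite /= inordK.
rewrite e0 e1 expr0 expr1. ring.
Qed.
Lemma det3E (A : 'M[R]_3) : \det A =
  A 0 0 * A 1 1 * A 2 2 - A 0 0 * A 1 2 * A 2 1 - A 0 1 * A 1 0 * A 2 2
  + A 0 1 * A 1 2 * A 2 0 + A 0 2 * A 1 0 * A 2 1 - A 0 2 * A 1 1 * A 2 0.
Proof.
rewrite (expand_det_row _ 0) !big_ord_recr big_ord0 /= /cofactor !det2E !mxE.
set a := fun i j : nat => A (inord i) (inord j).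
have aE : forall i j, A i j = a i j by move=> i j; rewrite /a !inord_val.
rewrite !aE /=. rewrite /a. 
have e0 : (inord 0 : 'I_3) = 0 by apply: val_inj; rewrite /= inordK.
have e1 : (inord 1 : 'I_3) = 1 by apply: val_inj; rewrite /= inordK.
have e2 : (inord 2 : 'I_3) = 2 by apply: val_inj; rewrite /= inordK.
rewrite e0 e1 e2 /=. ring.
Qed.
End S.

Fixpoint sgnF (k : nat) (s : seq nat) : int :=
  match k, s with
  | k'.+1, a :: s' => if a \in s' then 0 else (-1) ^+ a * sgnF k' (map (unbump a) s')
  | _, _ => 1
  end.
Definition sgnL s := sgnF (size s) s.
Lemma sgnL_cons a s : sgnL (a :: s) =
  if a \in s then 0 else (-1) ^+ a * sgnL (map (unbump a) s).
Proof. by rewrite /sgnL /= size_map. Qed.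

Lemma det_delta (R : comNzRingType) n (f : 'I_n -> 'I_n) :
  \det (\matrix_(i, j) ((f i == j)%:R : R)) =
  (sgnL [seq (f i : nat) | i <- enum 'I_n])%:~R.
Proof.
elim: n f => [|n IH] f; first by rewrite det_mx00 enum_ord0.
rewrite (expand_det_row _ ord0) (bigD1 (f ord0)) //= big1 => [|j /negbTE hj]; last first.
  by rewrite mxE eq_sym hj mul0r.
rewrite mxE eqxx mul1r addr0 /cofactor add0n enum_ordSl /= sgnL_cons -map_comp.
case: ifP => [/mapP [i _ /= /val_inj hi]|hnot].
  rewrite (expand_det_row _ i) big1 ?mulr0 // => j _.
  by rewrite !mxE -hi (negbTE (neq_lift _ _)) mul0r.
pose g (i : 'I_n) : 'I_n := if unlift (f ord0) (f (lift ord0 i)) is Some j then j else i.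
have hg : forall i, lift (f ord0) (g i) = f (lift ord0 i).
  move=> i; rewrite /g; case: unliftP => [j -> //|] hE.
  by move: hnot; rewrite -hE (map_f (fun i : 'I_n => (f (lift ord0 i) : nat))) ?mem_enum // hE.
have -> : row' ord0 (col' (f ord0) (\matrix_(i, j) ((f i == j)%:R : R)))
          = \matrix_(i, j) ((g i == j)%:R).
  by apply/matrixP => i j; rewrite !mxE -hg (inj_eq (@lift_inj _ _)).
rewrite IH.
have -> : [seq (g i : nat) | i <- enum 'I_n] =
          map (unbump (f ord0)) [seq ((f \o lift ord0) i : nat) | i <- enum 'I_n].
  by rewrite -map_comp; apply: eq_map => i /=; rewrite -hg /= bumpK.
by rewrite rmorphM /= rmorphXn /= rmorphN1.
Qed.

Definition TZlist : seq (seq (seq int)) := [:: [:: [:: 0; 0; 0; 0; 0; 0; 0]; [:: 0; 0; 1; 0; 0; 0; 0]; [:: 0; -1; 0; 0; 0; 0; 0]; [:: 0; 0; 0; 0; -1; 0; 0]; [:: 0; 0; 0; 1; 0; 0; 0]; [:: 0; 0; 0; 0; 0; 0; -1]; [:: 0; 0; 0; 0; 0; 1; 0]]; [:: [:: 0; 0; -1; 0; 0; 0; 0]; [:: 0; 0; 0; 0; 0; 0; 0]; [:: 1; 0; 0; 0; 0; 0; 0]; [:: 0; 0; 0; 0; 0; -1; 0]; [:: 0; 0; 0; 0; 0; 0; 1]; [:: 0; 0; 0; 1; 0; 0; 0]; [:: 0; 0; 0; 0; -1; 0; 0]]; [:: [:: 0; 1; 0; 0; 0; 0; 0]; [:: -1;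 0; 0; 0; 0; 0; 0]; [:: 0; 0; 0; 0; 0; 0; 0]; [:: 0; 0; 0; 0; 0; 0; -1]; [:: 0; 0; 0; 0; 0; -1; 0]; [:: 0; 0; 0; 0; 1; 0; 0]; [:: 0; 0; 0; 1; 0; 0; 0]]; [:: [:: 0; 0; 0; 0; 1; 0; 0]; [:: 0; 0; 0; 0; 0; 1; 0]; [:: 0; 0; 0; 0; 0; 0; 1]; [:: 0; 0; 0; 0; 0; 0; 0]; [:: -1; 0; 0; 0; 0; 0; 0]; [:: 0; -1; 0; 0; 0; 0; 0]; [:: 0; 0; -1; 0; 0; 0; 0]]; [:: [:: 0; 0; 0; -1; 0; 0; 0]; [:: 0; 0; 0; 0; 0; 0; -1]; [:: 0; 0; 0; 0; 0; 1; 0]; [:: 1; 0; 0; 0; 0; 0; 0]; [:: 0; 0; 0; 0; 0; 0; 0]; [:: 0; 0; -1; 0; 0; 0; 0]; [:: 0; 1; 0; 0; 0; 0; 0]]; [:: [:: 0; 0; 0; 0; 0; 0; 1]; [:: 0; 0; 0; -1; 0; 0; 0]; [:: 0; 0; 0; 0; -1; 0; 0]; [:: 0; 1; 0; 0; 0; 0; 0]; [:: 0; 0; 1; 0; 0; 0; 0]; [:: 0; 0; 0; 0; 0; 0; 0]; [:: -1; 0; 0; 0; 0; 0; 0]]; [:: [:: 0; 0; 0; 0; 0; -1; 0]; [:: 0; 0; 0; 0; 1; 0; 0]; [:: 0; 0; 0; -1; 0; 0; 0]; [:: 0; 0; 1; 0; 0; 0; 0]; [:: 0; -1; 0; 0;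 0; 0; 0]; [:: 1; 0; 0; 0; 0; 0; 0]; [:: 0; 0; 0; 0; 0; 0; 0]]].
Definition PZlist : seq int := [:: 0; 0; 0; 0; 0; 0; 0; 0; 0; 0; 0; 0; 0; 0; 0; 0; 0; 0; 0; 0; 0; 0; 0; 0; 0; 0; 0; 0; 0; 0; 0; 0; 0; 0; 0; 0; 0; 0; 0; 0; 0; 0; 0; 0; 0; 0; 0; 0; 0; 0; 0; 0; 0; 0; 0; 0; 0; 0; 0; 0; 0; 0; 0; 0; 0; 0; 0; 0; 0; 0; 0; 0; 0; 0; 0; 0; -1; 0; 0; 0; 0; 0; -1; 0; 0; 0; 0; 0; 1; 0; 0; 0; 0; 0; 1; 0; 0; 0; 0; 0; 0; 0; 0; 0; 0; 0; 0; 0; 0; 0; 0; 0; 0; 0; 0; 0; 0; 0; 0; 0; 0; 0; 0; 0; 1; 0; 0; 0; 0; 0; 0; 0; -1; 0; 0; 0; -1; 0; 0; 0; 0; 0; 0; 0; 1; 0; 0; 0; 0; 0; 0; 0; 0; 0; 0; 0; 0; 0; 0; 0; 1; 0; 0; 0; 0; 0; -1; 0; 0; 0; 0; 0; 0; 0; 0; 0; 0; 0; 0; 0; 0; 0; 0; 0; 1; 0; 0; 0; 0; 0; -1; 0; 0; 0; 0; 0; 0; 0; 0; 0; 0; 0; 0; 0; 0; 0; 0; 0; 1; 0; 0; 0; 0; 0; 0; 0; 1; 0; 0; 0; 0; 0; 0; 0; 0; 0; 0; 0; 0; 0; 0; 0; -1; 0; 0; 0; 0; 0; 0; 0; -1;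 0; 0; 0; 0; 0; 0; 0; 0; 0; 0; 0; 0; 0; 0; 0; -1; 0; 0; 0; 0; 0; 1; 0; 0; 0; 0; 0; -1; 0; 0; 0; 0; 0; 1; 0; 0; 0; 0; 0; 0; 0; 0; 0; 0; 0; 0; 0; 0; 0; 0; 0; 0; 0; 0; 0; 0; 0; 0; 0; 0; 0; 0; 0; -1; 0; 0; 0; 0; 0; 0; 0; -1; 0; 0; 0; 1; 0; 0; 0; 0; 0; 0; 0; 1; 0; 0; 0; 0; 0; 0; 0; 0; 0; 0; 0; 0; 0; 0; 0; 0; 0; 0; 0; 0; 0; 0; 0; 0; 0; 0; 0; 0; 0; 0; 0; 0; 0; 0; 0; 0; 0; 0; 0; 0; 0; 0; 0; 0; 0; 1; 0; 0; 0; 0; 0; 1; 0; 0; 0; 0; 0; -1; 0; 0; 0; 0; 0; -1; 0; 0; 0; 0; 0; 0; 0; 0; 0; 0; 0; 0; 0; 0; 0; 0; 0; 0; 0; 0; 0; 0; 0; 0; 0; 0; 0; 0; 0; 0; 0; 0; 0; 0; 0; 0; 0; 0; 0; 0; 0; 0; 0; 0; 0; 0; 0; 0; 0; 0; 0; 0; 0; 0; 0; 0; 0; 0; 0; 0; 0; 0; 0; 0; 0; 0; 0; 0; 0; 0; 0; 0; 0; 0; 0; 0; 0; -1; 0; 0; 0; 0; 0; 1; 0; 0; 0; 0; 0; 0; 0; 0; 0; -1; 0; 0; 0; 0; 0; 1; 0; 0; 0; 0; 0; 0; 0; -1; 0; 0; 0; 0; 0; 0; 0; 0; 0; 0; 0;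 1; 0; 0; 0; 0; 0; 0; 0; 0; 0; 0; 0; -1; 0; 0; 0; 0; 0; 0; 0; 0; 0; 0; 0; 1; 0; 0; 0; 0; 0; 0; 0; 0; 0; 0; 0; -1; 0; 0; 0; 0; 0; 0; 0; 0; 0; 0; 0; -1; 0; 0; 0; 0; 0; 1; 0; 0; 0; 0; 0; 0; 0; 0; 0; 0; 0; 1; 0; 0; 0; 0; 0; 0; 0; 0; 0; 0; 0; 0; 0; 0; 0; 0; 0; 1; 0; 0; 0; 0; 0; 0; 0; 0; 0; 0; 0; 0; 0; 0; 0; 1; 0; 0; 0; 0; 0; 0; 0; -1; 0; 0; 0; 0; 0; 0; 0; 0; 0; 0; 0; 0; 0; 0; 0; -1; 0; 0; 0; 0; 0; 0; 0; 1; 0; 0; 0; 0; 0; 0; 0; 0; 0; 0; 0; 0; 0; 0; 0; -1; 0; -1; 0; 0; 0; 0; 0; 0; 0; 0; 0; 0; 0; 0; 0; 0; 0; 1; 0; 0; 0; 0; 0; 0; 0; 0; 0; 0; 0; 0; 0; 0; 0; 0; 0; 0; 0; 0; 0; 0; 0; 0; 0; 0; 0; 0; 0; 0; 0; 0; 0; 0; 0; 0; 0; -1; 0; 0; 0; 0; 0; 0; 0; 1; 0; 0; 0; 1; 0; 0; 0; 0; 0; 0; 0; -1; 0; 0; 0; 0; 0; 0; 0; 0; 0; 0; 0; 0; 0; 0; 0; 0; 0; 0; 0; 0; 0; 0; 0; 0; 0; 0; 0; 1; 0; 0; 0; 0; 0; -1; 0; 0; 0; 0; 0; 0; 0; 0;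 0; 1; 0; 0; 0; 0; 0; -1; 0; 0; 0; 0; 0; 0; 0; 0; 0; 0; 0; 0; 0; 0; 0; 0; 0; 0; 0; 0; 0; 0; 0; 0; 0; 0; 0; 0; 0; 0; 0; 0; 0; 0; 0; 0; 0; 0; 0; 0; 0; 0; 0; 0; 0; 0; 0; 0; 0; 0; 0; 0; 0; 0; 0; 1; 0; 0; 0; 0; 0; -1; 0; 0; 0; 0; 0; 0; 0; 0; 0; 0; 0; 0; 0; 0; 0; 0; 0; 1; 0; 0; 0; 0; 0; -1; 0; 0; 0; 0; 0; 0; 0; 0; 0; 0; 0; 0; 0; 0; 0; 0; 0; 0; 0; -1; 0; 0; 0; 1; 0; 0; 0; 0; 0; 0; 0; 0; 0; 0; 0; -1; 0; 0; 0; 0; 0; 0; 0; 0; 0; 0; 0; 0; 0; 0; 0; 0; 0; 0; 0; 1; 0; 0; 0; 0; 0; 0; 0; 0; 0; -1; 0; 0; 0; 0; 0; 0; 0; 0; 0; -1; 0; 0; 0; 0; 0; 0; 0; 1; 0; 0; 0; 0; 0; 0; 0; 0; 0; 0; 0; 0; 0; 0; 0; 0; 0; 0; 0; 0; 0; 1; 0; 0; 0; 0; 0; 0; 0; 0; 0; 1; 0; 0; 0; 0; 0; 0; 0; 1; 0; 0; 0; 0; 0; 0; 0; 0; 0; 0; 0; 0; 0; 0; 0; -1; 0; 0; 0; 0; 0; 0; 0; -1; 0; 0; 0; 0; 0; 0; 0; 0; 0; 0; 0; 0; 0; 0; 0; 0; 0; 0; 0; 0; 0; 0; 0; 0; 0;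 -1; 0; 0; 0; 0; 0; 1; 0; 0; 0; 0; 0; 0; 0; 0; 0; 0; 0; 0; 0; 0; 0; 0; 0; -1; 0; 0; 0; 0; 0; 1; 0; 0; 0; 0; 0; 0; 0; 0; 0; 0; 0; 1; 0; 0; 0; 0; 0; 0; 0; 0; 0; 0; 0; -1; 0; 0; 0; 0; 0; 0; 0; 0; 0; 0; 0; 1; 0; 0; 0; 0; 0; 0; 0; 0; 0; 0; 0; -1; 0; 0; 0; 0; 0; 0; 0; 0; 0; 0; 0; -1; 0; 0; 0; 0; 0; 1; 0; 0; 0; 0; 0; 0; 0; 0; 0; 0; 0; 0; 0; 0; 0; 0; 0; -1; 0; 0; 0; 0; 0; 1; 0; 0; 0; 0; 0; 0; 0; 0; 0; 0; 0; 0; 0; 0; 0; 0; 0; 0; 0; 0; 0; 0; 0; 0; 0; 0; 0; 0; 0; 0; 0; 0; 0; 0; 0; 0; 0; 0; 0; 0; 0; 0; 0; 0; 0; 0; 0; 0; 0; 0; 0; 0; 0; 0; 0; 0; 0; 0; 0; 0; 0; 0; 0; 0; 0; 0; 0; 0; 0; 0; 0; -1; 0; 0; 0; 0; 0; 1; 0; 0; 0; 0; 0; 0; 0; 0; 0; 0; 0; 0; 0; 0; 0; 0; 0; 0; 0; 0; 0; 0; 0; 0; 0; 1; 0; 0; 0; 0; 0; -1; 0; 0; 0; 1; 0; 0; 0; 0; 0; 0; 0; 0; 0; 0; 0; -1; 0; 0; 0; 0; 0; 0; 0; 0; 0; 0; 0; 0; 0; 0; 0; 0; 0; 0; 0; -1;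 0; 0; 0; 0; 0; 0; 0; 0; 0; 0; 0; 1; 0; 0; 0; -1; 0; 0; 0; 0; 0; 1; 0; 0; 0; 0; 0; 0; 0; 0; 0; 0; 0; 0; 0; 0; 0; 0; 0; 0; 0; 0; 0; 0; 0; 0; 0; 1; 0; 0; 0; 0; 0; -1; 0; 0; 0; 0; 0; 0; 0; 0; 0; 0; 0; 0; 0; 0; 0; 0; 0; 0; 0; 0; 0; -1; 0; 0; 0; 0; 0; 0; 0; -1; 0; 0; 0; 0; 0; 0; 0; 0; 0; 0; 0; 0; 0; 0; 0; 1; 0; 0; 0; 0; 0; 0; 0; 1; 0; 0; 0; 0; 0; 0; 0; 0; 0; 1; 0; 0; 0; 0; 0; 0; 0; 0; 0; 0; 0; 1; 0; 0; 0; 0; 0; -1; 0; 0; 0; 0; 0; 0; 0; 0; 0; 0; 0; -1; 0; 0; 0; 0; 0; 0; 0; 0; 0; 0; 0; 0; 0; 0; 0; 0; 0; 0; 0; 1; 0; 0; 0; -1; 0; 0; 0; 0; 0; 0; 0; 0; 0; 0; 0; 1; 0; 0; 0; 0; 0; 0; 0; 0; 0; 0; 0; 0; 0; 0; 0; 0; 0; 0; 0; -1; 0; 0; 0; 0; 0; 0; 0; 0; 0; 0; 0; 0; 0; 0; 0; 1; 0; 0; 0; 0; 0; -1; 0; 0; 0; 0; 0; 0; 0; 0; 0; 0; 0; 0; 0; 0; 0; 0; 0; 0; 0; 0; 0; 0; 0; 0; 0; -1; 0; 0; 0; 0; 0; 1; 0; 0; 0; 0; 0; 0; 0; 0; 0;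 0; 0; 0; 0; 0; 0; 0; 0; 0; 0; 0; 0; 0; 0; 0; 0; 0; 0; 0; 0; 0; 0; 0; 0; 0; 0; 0; 0; 0; 0; 0; 0; 0; 0; 0; 0; 0; 0; 0; 0; 0; 0; -1; 0; 0; 0; 0; 0; 1; 0; 0; 0; 0; 0; 0; 0; 0; 0; 0; 0; 0; 0; 0; 0; 0; 0; 0; 0; 1; 0; 0; 0; 0; 0; 0; 0; 0; 0; 0; 0; 0; 0; 0; 0; 0; 0; -1; 0; 0; 0; 0; 0; -1; 0; 0; 0; 0; 0; 0; 0; 0; 0; 0; 0; 1; 0; 0; 0; 0; 0; 0; 0; 0; 0; 0; 0; -1; 0; 0; 0; 0; 0; 0; 0; 0; 0; 0; 0; 1; 0; 0; 0; 0; 0; 0; 0; 0; 0; 0; 0; 0; 0; 0; 0; 0; 0; 0; 0; 0; 0; 1; 0; 0; 0; 0; 0; -1; 0; 0; 0; 0; 0; 1; 0; 0; 0; 0; 0; -1; 0; 0; 0; 0; 0; 0; 0; 0; 0; 0; 0; 0; 0; 0; 0; 0; 0; 0; 0; 0; 0; 0; 0; -1; 0; 0; 0; 0; 0; 0; 0; 0; 0; 0; 0; 0; 0; 0; 0; -1; 0; 0; 0; 0; 0; 0; 0; 1; 0; 0; 0; 0; 0; 0; 0; 0; 0; 0; 0; 0; 0; 0; 0; 1; 0; 0; 0; 0; 0; 0; 0; 1; 0; 0; 0; 0; 0; 0; 0; 0; 0; 1; 0; 0; 0; 0; 0; 0; 0; -1; 0; 0; 0; 0; 0; 0; 0; 0;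 0; 0; 0; 0; 0; 0; 0; 0; 0; 0; 0; 0; 0; -1; 0; 0; 0; 0; 0; 0; 0; -1; 0; 0; 0; 0; 0; 0; 0; 0; 0; 0; 0; 1; 0; 0; 0; 0; 0; 0; 0; 0; 0; 0; 0; 0; 0; 0; 0; 0; 0; 0; 0; 1; 0; 0; 0; 0; 0; 0; 0; 0; 0; 0; 0; -1; 0; 0; 0; 1; 0; 0; 0; 0; 0; -1; 0; 0; 0; 0; 0; 0; 0; 0; 0; 0; 0; 0; 0; 0; 0; 0; 0; 0; 0; -1; 0; 0; 0; 0; 0; 0; 0; 0; 0; 0; 0; 0; 0; 0; 0; 0; 0; 1; 0; 0; 0; 0; 0; 0; 0; 0; 0; 0; 0; 0; 0; 0; 0; 0; 0; 0; 0; 0; 0; 0; 0; 0; 0; 0; 0; 0; 0; 0; 0; 0; 0; 0; 0; 0; 0; 0; 0; 0; 0; 0; 0; 0; 0; 0; 0; 0; 0; 0; 0; 0; 0; 0; 0; 0; 0; 0; 0; 0; 0; -1; 0; 0; 0; 0; 0; 1; 0; 0; 0; 0; 0; 0; 0; 0; 0; 1; 0; 0; 0; 0; 0; -1; 0; 0; 0; 0; 0; 0; 0; 0; 0; 0; 0; 0; 0; 0; 0; 0; 0; 0; 0; 0; 0; 0; 0; 0; 0; 0; 0; 1; 0; 0; 0; 0; 0; 0; 0; 1; 0; 0; 0; -1; 0; 0; 0; 0; 0; 0; 0; -1; 0; 0; 0; 0; 0; 0; 0; 0; 0; 0; 0; 0; 0; 0; 0; 0; 0; 0; 0; 0; 0;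 -1; 0; 0; 0; 0; 0; 0; 0; 0; 0; 0; 0; 0; 0; 0; 0; 1; 0; 1; 0; 0; 0; 0; 0; 0; 0; 0; 0; 0; 0; 0; 0; 0; 0; -1; 0; 0; 0; 0; 0; 0; 0; 0; 0; 0; 0; 0; 0; 0; 0; -1; 0; 0; 0; 0; 0; 0; 0; -1; 0; 0; 0; 0; 0; 0; 0; 0; 0; 0; 0; 0; 0; 0; 0; 1; 0; 0; 0; 0; 0; 0; 0; 1; 0; 0; 0; 0; 0; 0; 0; 0; 0; 0; 0; 0; 0; 1; 0; 0; 0; 0; 0; -1; 0; 0; 0; 0; 0; 0; 0; 0; 0; 0; 0; 0; 0; 0; 0; 0; 0; 0; 0; 0; 0; 0; 0; 0; 0; -1; 0; 0; 0; 0; 0; 1; 0; 0; 0; 0; 0; 0; 0; 0; 0; 0; 0; 1; 0; 0; 0; 0; 0; 0; 0; 0; 0; 0; 0; -1; 0; 0; 0; 0; 0; 0; 0; 0; 0; 0; 0; 1; 0; 0; 0; 0; 0; 0; 0; 0; 0; 0; 0; -1; 0; 0; 0; 0; 0; 0; 0; 0; 0; 0; 0; 0; 0; 0; 0; 0; 0; 0; 0; 1; 0; 0; 0; 0; 0; -1; 0; 0; 0; 0; 0; 0; 0; 0; 0; -1; 0; 0; 0; 0; 0; 1; 0; 0; 0; 0; 0; 0; 0; 0; 0; 0; 0; 0; 0; 0; 0; 0; 0; 0; 0; 0; 0; 0; 0; 0; 0; 0; 0; 0; 0; 0; 0; 0; 0; 0; 0; 0; 0; 0; 0; 0; 0; 0;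 0; 0; 0; 0; 0; 0; 0; 0; 0; 0; 0; 0; 0; 0; 0; 0; 0; 0; 0; 0; 0; 0; 0; 0].
Definition TZt (a b c : nat) : int := nth 0 (nth [::] (nth [::] TZlist a) b) c.
Definition PZt (d1 d2 d3 d4 : nat) : int := nth 0 PZlist (d1 * 343 + d2 * 49 + d3 * 7 + d4).
Definition sumI (F : nat -> int) : int := foldr (fun i acc => F i + acc) 0 (iota 0 7).
Definition allI (P : nat -> bool) : bool := all P (iota 0 7).

Definition m3 {R : comPzRingType} (x y z : nat -> R) (p q r : nat) : R :=
  x p * y q * z r - x p * y r * z q - x q * y p * z r + x q * y r * z p
  + x r * y p * z q - x r * y q * z p.
Definition phiPg {R : comPzRingType} (x y z : nat -> R) : R :=
  m3 x y z 0 1 2 - m3 x y z 0 5 6 - m3 x y z 4 1 6 - m3 x y z 4 5 2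
  + m3 x y z 3 0 4 + m3 x y z 3 1 5 + m3 x y z 3 2 6.

Lemma TZ_check : allI (fun a => allI (fun b => allI (fun c =>
  phiPg (fun k => (k == a)%:R) (fun k => (k == b)%:R) (fun k => (k == c)%:R) == TZt a b c))).
Proof. by vm_compute. Qed.

Lemma hodge_check : allI (fun d1 => allI (fun d2 => allI (fun d3 => allI (fun d4 =>
  sumI (fun a => sumI (fun b => sumI (fun c => TZt a b c * sgnL [:: a; b; c; d1; d2; d3; d4])))
   == 6 * PZt d1 d2 d3 d4)))).
Proof. Time vm_compute. by []. Qed.

Section D.
Variable R : realType.
Notation vec := (vec R).
Definition xn (X : vec) (k : nat) : R := X (inord k) ord0.
Definition dl (a : 'I_7) : vec := delta_mx a ord0.

Lemma phi_stdE (u v w : vec) : phi_std u v w = phiPg (xn u) (xn v) (xn w).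
Proof.
rewrite /phi_std /d3 /wedge3 !det3E !mxE /=.
rewrite /phiPg /m3 /xn /ix /=. ring.
Qed.

Lemma xn_dl (a : 'I_7) k : (k < 7)%N -> xn (dl a) k = (k == a)%:R.
Proof.
move=> hk; rewrite /xn /dl mxE eqxx andbT; congr (_%:R).
by rewrite -val_eqE /= inordK.
Qed.



Lemma allIP (P : nat -> bool) : allI P -> forall k, (k < 7)%N -> P k.
Proof. by move/allP => h k hk; apply: h; rewrite mem_iota. Qed.

Lemma phi_dl (a b c : 'I_7) : phi_std (dl a) (dl b) (dl c) = (TZt a b c)%:~R.
Proof.
have := allIP TZ_check (ltn_ord a) => /allIP /(_ _ (ltn_ord b)) /allIP /(_ _ (ltn_ord c)) /eqP <-.
have bE : forall bb : bool, ((bb%:R : int)%:~R : R) = bb%:R by case.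
rewrite phi_stdE /phiPg /m3 !xn_dl // !(intrD, intrB, intrM) !bE.
ring.
Qed.

Lemma sumIE (F : nat -> int) : \sum_(a < 7) F a = sumI F.
Proof. by rewrite !big_ord_recl big_ord0 /sumI /=. Qed.

Lemma eps7E (t : 7.-tuple 'I_7) : eps7 R t = (sgnL (map (@nat_of_ord 7) t))%:~R :> R.
Proof. by rewrite /eps7 det_delta -[in RHS](map_tnth_enum t) -map_comp. Qed.

Lemma intr_sum (F : 'I_7 -> int) : (\sum_i F i)%:~R = \sum_i (F i)%:~R :> R.
Proof. exact: (big_morph _ (@intrD R) (mulr0z _)). Qed.

Definition psiS (X1 X2 X3 X4 : vec) : R :=
  \sum_(d1 < 7) \sum_(d2 < 7) \sum_(d3 < 7) \sum_(d4 < 7)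
    (PZt d1 d2 d3 d4)%:~R * X1 d1 ord0 * X2 d2 ord0 * X3 d3 ord0 * X4 d4 ord0.

Definition Gc (a b c d1 d2 d3 d4 : nat) : int := TZt a b c * sgnL [:: a; b; c; d1; d2; d3; d4].

Lemma coef_int (d1 d2 d3 d4 : 'I_7) :
  \sum_(a < 7) \sum_(b < 7) \sum_(c < 7) Gc a b c d1 d2 d3 d4 = 6 * PZt d1 d2 d3 d4.
Proof.
transitivity (\sum_(a < 7) sumI (fun b => sumI (fun c => Gc a b c d1 d2 d3 d4))).
  apply: eq_bigr => a _; rewrite -(sumIE (fun b => sumI (fun c => Gc a b c d1 d2 d3 d4))).
  apply: eq_bigr => b _; by rewrite -(sumIE (fun c => Gc a b c d1 d2 d3 d4)).
rewrite (sumIE (fun a => sumI (fun b => sumI (fun c => Gc a b c d1 d2 d3 d4)))).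
by have := allIP hodge_check (ltn_ord d1) => /allIP /(_ _ (ltn_ord d2)) /allIP /(_ _ (ltn_ord d3)) /allIP /(_ _ (ltn_ord d4)) /eqP.
Qed.

Lemma hodgeE phi P (u1 u2 u3 u4 : vec) : adapted phi P ->
  hodge3 P phi u1 u2 u3 u4 = psiS (P *m u1) (P *m u2) (P *m u3) (P *m u4).
Proof.
move=> [Pu hphi]; rewrite /hodge3 /psiS.
apply: eq_bigr => d1 _; apply: eq_bigr => d2 _; apply: eq_bigr => d3 _; apply: eq_bigr => d4 _.
congr (_ * _ * _ * _ * _).
under eq_bigr => a _ do under eq_bigr => b _ do under eq_bigr => c _ do
  rewrite hphi !mulmxA mulmxV // !mul1mx phi_dl eps7E -intrM -/(Gc a b c d1 d2 d3 d4).
under eq_bigr => a _ do under eq_bigr => b _ do rewrite -(intr_sum (fun c => Gc a b c d1 d2 d3 d4)).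
under eq_bigr => a _ do rewrite -(intr_sum (fun b => \sum_(c < 7) Gc a b c d1 d2 d3 d4)).
rewrite -(intr_sum (fun a => \sum_(b < 7) \sum_(c < 7) Gc a b c d1 d2 d3 d4)) coef_int.
rewrite intrM mulrA.
have -> : ((6 : int)%:~R : R) = 6%:R by [].
by rewrite mulVf ?mul1r // pnatr_eq0.
Qed.
End D.

Section E.
Variable R : realType.
Implicit Types (x : nat -> R) (al be ga : R).

Definition crE x (i j : nat) : R :=
  x 0 * (TZt 0 j i)%:~R + x 1 * (TZt 1 j i)%:~R + x 2 * (TZt 2 j i)%:~R
  + x 3 * (TZt 3 j i)%:~R + x 4 * (TZt 4 j i)%:~R + x 5 * (TZt 5 j i)%:~R + x 6 * (TZt 6 j i)%:~R.
Definition a0f al be ga x (i j : nat) : R := al * (i == j)%:R + be * x i * x j + ga * crE x i j.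
Definition phx x (b c : nat) : R :=
  x 0 * (TZt 0 b c)%:~R + x 1 * (TZt 1 b c)%:~R + x 2 * (TZt 2 b c)%:~R
  + x 3 * (TZt 3 b c)%:~R + x 4 * (TZt 4 b c)%:~R + x 5 * (TZt 5 b c)%:~R + x 6 * (TZt 6 b c)%:~R.
Definition psE x (a b c : nat) : R :=
  x 0 * (PZt 0 a b c)%:~R + x 1 * (PZt 1 a b c)%:~R + x 2 * (PZt 2 a b c)%:~R
  + x 3 * (PZt 3 a b c)%:~R + x 4 * (PZt 4 a b c)%:~R + x 5 * (PZt 5 a b c)%:~R + x 6 * (PZt 6 a b c)%:~R.
Definition XE x (a b c : nat) : R := x a * phx x b c - x b * phx x a c + x c * phx x a b.
Definition nE x : R := x 0 ^+ 2 + x 1 ^+ 2 + x 2 ^+ 2 + x 3 ^+ 2 + x 4 ^+ 2 + x 5 ^+ 2 + x 6 ^+ 2.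
Definition a1E al be ga x := al ^+ 3 - 3 * al * ga ^+ 2 * nE x.
Definition a2E al be ga x := 3 * al ^+ 2 * ga - ga ^+ 3 * nE x.
Definition a3E al be ga x := be * (al ^+ 2 + ga ^+ 2 * nE x) + 4 * al * ga ^+ 2.

Lemma triE al be ga x (a b c : nat) : (a < b)%N -> (b < c)%N -> (c < 7)%N ->
  phiPg (fun k => a0f al be ga x k a) (fun k => a0f al be ga x k b) (fun k => a0f al be ga x k c)
  = a1E al be ga x * (TZt a b c)%:~R + a2E al be ga x * psE x a b c + a3E al be ga x * XE x a b c.
Proof.
case: a => [|[|[|[|[|[|[|a]]]]]]]; case: b => [|[|[|[|[|[|[|b]]]]]]];
  case: c => [|[|[|[|[|[|[|c]]]]]]] => //= _ _ _;
  rewrite /phiPg /m3 /a0f /crE /psE /XE /phx /a1E /a2E /a3E /nE /TZt /PZt /=; ring.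
Qed.
End E.

Lemma PZ_alt_check : allI (fun d => allI (fun a => allI (fun b => allI (fun c =>
  (PZt d b a c == - PZt d a b c) && (PZt d a c b == - PZt d a b c)
  && (PZt d a a c == 0) && (PZt d a b b == 0))))).
Proof. by vm_compute. Qed.

Section F.
Variable R : realType.
Notation vec := (vec R).
Local Notation dl := (@dl R).

Definition lin3 (F : vec -> vec -> vec -> R) :=
  [/\ forall k U U' V X, F (k *: U + U') V X = k * F U V X + F U' V X,
      forall k U V V' X, F U (k *: V + V') X = k * F U V X + F U V' X &
      forall k U V X X', F U V (k *: X + X') = k * F U V X + F U V X'].

Lemma vec_sum (U : vec) : U = \sum_(a < 7) U a ord0 *: dl a.
Proof.
apply/matrixP => i j; rewrite (ord1 j) summxE (bigD1 i) //= big1 => [|a /negbTE h].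
  by rewrite !mxE !eqxx mulr1 addr0.
by rewrite !mxE eq_sym h mulr0.
Qed.

Lemma linsum (f : vec -> R) (c : 'I_7 -> R) (v : 'I_7 -> vec) :
  (forall k U U', f (k *: U + U') = k * f U + f U') ->
  f (\sum_(a < 7) c a *: v a) = \sum_(a < 7) c a * f (v a).
Proof.
move=> hf; have f0 : f 0 = 0.
  have := hf 1 0 0; rewrite scaler0 addr0 mul1r => /eqP.
  by rewrite -subr_eq0 opprD addrA subrr sub0r oppr_eq0 => /eqP.
apply: (big_rec2 (fun s t => f t = s)) => [//|a y1 y2 _ IH]; by rewrite hf IH.
Qed.

Lemma expand3 F : lin3 F -> forall U V X,
  F U V X = \sum_(a < 7) \sum_(b < 7) \sum_(c < 7)
              U a ord0 * V b ord0 * X c ord0 * F (dl a) (dl b) (dl c).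
Proof.
move=> [h1 h2 h3] U V X.
rewrite {1}(vec_sum U) (linsum (f := fun U => F U V X)) //; apply: eq_bigr => a _.
rewrite {1}(vec_sum V) (linsum (f := fun V => F (dl a) V X)) // mulr_sumr; apply: eq_bigr => b _.
rewrite {1}(vec_sum X) (linsum (f := fun X => F (dl a) (dl b) X)) // !mulr_sumr; apply: eq_bigr => c _.
by rewrite !mulrA.
Qed.

Lemma xn_lin k (U U' : vec) i : xn (k *: U + U') i = k * xn U i + xn U' i.
Proof. by rewrite /xn !mxE. Qed.

Lemma phi_lin3 : lin3 (@phi_std R).
Proof.
split=> *; rewrite !phi_stdE /phiPg /m3 !xn_lin; ring.
Qed.

Lemma phi_alt (U V X : vec) :
  [/\ phi_std V U X = - phi_std U V X, phi_std U X V = - phi_std U V X,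
      phi_std U U X = 0 & phi_std U V V = 0].
Proof. rewrite !phi_stdE /phiPg /m3; split; ring. Qed.

Lemma comp_lin3 (A : 'M[R]_7) F : lin3 F -> lin3 (fun U V X => F (A *m U) (A *m V) (A *m X)).
Proof.
by case=> h1 h2 h3; split=> *; rewrite mulmxDr -scalemxAr ?h1 ?h2 ?h3.
Qed.

Lemma psi_lin3 W : lin3 (psiS W).
Proof.
split=> *; rewrite /psiS mulr_sumr -big_split; apply: eq_bigr => d1 _;
  rewrite mulr_sumr -big_split; apply: eq_bigr => d2 _;
  rewrite mulr_sumr -big_split; apply: eq_bigr => d3 _;
  rewrite mulr_sumr -big_split; apply: eq_bigr => d4 _; rewrite !mxE /=; ring.
Qed.

Lemma sub_lin3 F G : lin3 F -> lin3 G -> lin3 (fun U V X => F U V X - G U V X).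
Proof.
case=> f1 f2 f3 [g1 g2 g3]; split=> *; rewrite ?f1 ?f2 ?f3 ?g1 ?g2 ?g3; ring.
Qed.

Lemma dl_sum (F : 'I_7 -> R) (a : 'I_7) : \sum_(j < 7) F j * (dl a) j ord0 = F a.
Proof.
rewrite (bigD1 a) //= big1 => [|j /negbTE h]; first by rewrite !mxE !eqxx mulr1 addr0.
by rewrite !mxE h mulr0.
Qed.

Lemma psi_dl W (a b c : 'I_7) :
  psiS W (dl a) (dl b) (dl c) = \sum_(d < 7) (PZt d a b c)%:~R * W d ord0.
Proof.
rewrite /psiS; apply: eq_bigr => d _.
rewrite (eq_bigr (fun d2 : 'I_7 => (\sum_(d3 < 7) \sum_(d4 < 7) (PZt d d2 d3 d4)%:~R * W d ord0 *
    (dl b) d3 ord0 * (dl c) d4 ord0) * (dl a) d2 ord0)); last first.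
  by move=> d2 _; rewrite mulr_suml; apply: eq_bigr => d3 _; rewrite mulr_suml;
     apply: eq_bigr => d4 _; ring.
rewrite dl_sum.
rewrite (eq_bigr (fun d3 : 'I_7 => (\sum_(d4 < 7) (PZt d a d3 d4)%:~R * W d ord0 *
    (dl c) d4 ord0) * (dl b) d3 ord0)); last first.
  by move=> d3 _; rewrite mulr_suml; apply: eq_bigr => d4 _; ring.
rewrite dl_sum.
rewrite (eq_bigr (fun d4 : 'I_7 => ((PZt d a b d4)%:~R * W d ord0) * (dl c) d4 ord0)); last first.
  by move=> d4 _; ring.
by rewrite dl_sum.
Qed.

Lemma W_xn (W : vec) (i : 'I_7) : W i ord0 = xn W i.
Proof. by rewrite /xn inord_val. Qed.

Lemma psi_dlE W (a b c : 'I_7) : psiS W (dl a) (dl b) (dl c) = psE (xn W) a b c.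
Proof.
rewrite psi_dl !big_ord_recl big_ord0 !W_xn /= /psE; ring.
Qed.

Lemma psi_alt W (a b c : 'I_7) :
  [/\ psiS W (dl b) (dl a) (dl c) = - psiS W (dl a) (dl b) (dl c),
      psiS W (dl a) (dl c) (dl b) = - psiS W (dl a) (dl b) (dl c),
      psiS W (dl a) (dl a) (dl c) = 0 & psiS W (dl a) (dl b) (dl b) = 0].
Proof.
have H : forall d : 'I_7, [/\ PZt d b a c = - PZt d a b c, PZt d a c b = - PZt d a b c,
     PZt d a a c = 0 & PZt d a b b = 0].
  move=> d; have := allIP PZ_alt_check (ltn_ord d) => /allIP /(_ _ (ltn_ord a))
    /allIP /(_ _ (ltn_ord b)) /allIP /(_ _ (ltn_ord c)) /andP [/andP [/andP [/eqP -> /eqP ->] /eqP ->] /eqP ->].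
  by [].
rewrite !psi_dl; split.
- by rewrite -sumrN; apply: eq_bigr => d _; case: (H d) => -> _ _ _; rewrite intrN mulNr.
- by rewrite -sumrN; apply: eq_bigr => d _; case: (H d) => _ -> _ _; rewrite intrN mulNr.
- by apply: big1 => d _; case: (H d) => _ _ -> _; rewrite mul0r.
- by apply: big1 => d _; case: (H d) => _ _ _ ->; rewrite mul0r.
Qed.

Lemma alt3 (G : 'I_7 -> 'I_7 -> 'I_7 -> R) :
  (forall a b c, G b a c = - G a b c) -> (forall a b c, G a c b = - G a b c) ->
  (forall a c, G a a c = 0) -> (forall a b, G a b b = 0) ->
  (forall a b c : 'I_7, (a < b)%N -> (b < c)%N -> G a b c = 0) ->
  forall a b c, G a b c = 0.
Proof.
move=> s12 s23 z12 z23 hs a b c.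
have z13 : forall a b, G a b a = 0 by move=> x y; rewrite s23 z12 oppr0.
case: (ltngtP a b) => [hab|hab|/val_inj eab]; last by rewrite eab z12.
- case: (ltngtP b c) => [hbc|hbc|/val_inj ebc]; last by rewrite ebc z23.
  + exact: hs.
  + case: (ltngtP a c) => [hac|hac|/val_inj eac]; last by rewrite eac z13.
    * by rewrite s23 (hs a c b hac hbc) oppr0.
    * by rewrite s23 -s12 (hs c a b hac hab).
- case: (ltngtP b c) => [hbc|hbc|/val_inj ebc]; last by rewrite ebc z23.
  + case: (ltngtP a c) => [hac|hac|/val_inj eac]; last by rewrite eac z13.
    * by rewrite s12 (hs b a c hab hac) oppr0.
    * by rewrite s12 -s23 (hs b c a hbc hac).
  + by rewrite s12 -s23 s12 (hs c b a hbc hab) oppr0.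
Qed.
End F.

Section G.
Variable R : realType.
Notation vec := (vec R).
Local Notation dl := (@dl R).

Definition A0m (al be ga : R) (W : vec) : 'M[R]_7 := \matrix_(i, j) a0f al be ga (xn W) i j.

Lemma xn_A0dl al be ga W (a : 'I_7) k : (k < 7)%N ->
  xn (A0m al be ga W *m dl a) k = a0f al be ga (xn W) k a.
Proof.
move=> hk; rewrite /xn mxE (eq_bigr (fun j => A0m al be ga W (inord k) j * dl a j ord0)) //.
by rewrite dl_sum mxE inordK.
Qed.

Lemma phiPg_ext (x x' y y' z z' : nat -> R) :
  (forall k, (k < 7)%N -> x k = x' k) -> (forall k, (k < 7)%N -> y k = y' k) ->
  (forall k, (k < 7)%N -> z k = z' k) -> phiPg x y z = phiPg x' y' z'.
Proof. by move=> hx hy hz; rewrite /phiPg /m3 !hx ?hy ?hz. Qed.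

Section Rel.
Variables (al be ga : R) (W : vec).
Hypotheses (h1 : a1E al be ga (xn W) = 1) (h2 : a2E al be ga (xn W) = 1)
           (h3 : a3E al be ga (xn W) = 0).
Let A := A0m al be ga W.
Let G (a b c : 'I_7) := phi_std (A *m dl a) (A *m dl b) (A *m dl c)
   - phi_std (dl a) (dl b) (dl c) - psiS W (dl a) (dl b) (dl c).

Lemma G_sorted (a b c : 'I_7) : (a < b)%N -> (b < c)%N -> G a b c = 0.
Proof.
move=> hab hbc; rewrite /G phi_stdE.
rewrite (@phiPg_ext _ (fun k => a0f al be ga (xn W) k a) _ (fun k => a0f al be ga (xn W) k b)
   _ (fun k => a0f al be ga (xn W) k c)); try by move=> k hk; rewrite xn_A0dl.
rewrite triE // phi_dl psi_dlE h1 h2 h3; ring.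
Qed.

Lemma G_zero a b c : G a b c = 0.
Proof.
apply: alt3; last exact: G_sorted.
- move=> x y z; rewrite /G; case: (phi_alt (A *m dl x) (A *m dl y) (A *m dl z)) => -> _ _ _.
  case: (phi_alt (dl x) (dl y) (dl z)) => -> _ _ _; case: (psi_alt W x y z) => -> _ _ _; ring.
- move=> x y z; rewrite /G; case: (phi_alt (A *m dl x) (A *m dl y) (A *m dl z)) => _ -> _ _.
  case: (phi_alt (dl x) (dl y) (dl z)) => _ -> _ _; case: (psi_alt W x y z) => _ -> _ _; ring.
- move=> x z; rewrite /G; case: (phi_alt (A *m dl x) (A *m dl z) (A *m dl z)) => _ _ -> _.
  case: (phi_alt (dl x) (dl z) (dl z)) => _ _ -> _; case: (psi_alt W x z z) => _ _ -> _; ring.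
- move=> x y; rewrite /G; case: (phi_alt (A *m dl x) (A *m dl y) (A *m dl y)) => _ _ _ ->.
  case: (phi_alt (dl x) (dl y) (dl y)) => _ _ _ ->; case: (psi_alt W x y y) => _ _ _ ->; ring.
Qed.

Lemma A0_pullback (U V X : vec) :
  phi_std (A *m U) (A *m V) (A *m X) = phi_std U V X + psiS W U V X.
Proof.
pose F := fun U V X : vec => phi_std (A *m U) (A *m V) (A *m X) - phi_std U V X - psiS W U V X.
have hF : lin3 F.
  apply: sub_lin3; last exact: psi_lin3.
  apply: sub_lin3; last exact: phi_lin3.
  exact: (comp_lin3 A (@phi_lin3 R)).
have := expand3 hF U V X; rewrite big1 => [/eqP|a _]; last first.
  rewrite big1 // => b _; rewrite big1 // => c _; rewrite /F.
  by have := G_zero a b c; rewrite /G => ->; rewrite mulr0.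
by rewrite /F subr_eq0 subr_eq => /eqP ->; ring.
Qed.
End Rel.
End G.

Section H.
Variable R : realType.

Lemma det_I_xy m (x y : 'cV[R]_m) : \det (1%:M - x *m y^T) = 1 - (y^T *m x) ord0 ord0.
Proof.
pose B : 'M[R]_(m + 1) := block_mx 1%:M x y^T 1%:M.
have e1 : B = block_mx 1%:M 0 y^T 1%:M *m block_mx 1%:M x 0 (1%:M - y^T *m x).
  by rewrite mulmx_block ?mul1mx ?mulmx1 ?mul0mx ?mulmx0 ?addr0 ?add0r addrC subrK.
have e2 : B = block_mx (1%:M - x *m y^T) x 0 1%:M *m block_mx 1%:M 0 y^T 1%:M.
  by rewrite mulmx_block ?mul1mx ?mulmx1 ?mul0mx ?mulmx0 ?addr0 ?add0r subrK.
have := e2; rewrite e1 => /(congr1 determinant).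
rewrite !det_mulmx !det_lblock !det_ublock !det1 !mul1r ?mulr1 det_mx11.
by rewrite !mxE eqxx /= => <-.
Qed.

Lemma det_nI_xy (n : R) (x y : 'cV[R]_7) : n != 0 ->
  \det (n%:M - x *m y^T) = n ^+ 7 - n ^+ 6 * (y^T *m x) ord0 ord0.
Proof.
move=> hn.
have -> : n%:M - x *m y^T = n *: (1%:M - (n^-1 *: x) *m y^T).
  by rewrite scalerBr -scalemxAl scalerA mulfV // scale1r scalemx1.
rewrite detZ det_I_xy -scalemxAr mxE mulrBr mulr1; congr (_ - _).
by rewrite exprSr -mulrA (mulrA n) mulfV // mul1r.
Qed.

Notation vec := (vec R).
Local Notation dl := (@dl R).

Definition Cm (v : vec) : 'M[R]_7 := \matrix_(a, b) phi_std v (dl a) (dl b).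
Definition nv (v : vec) : R := (v^T *m v) ord0 ord0.
Definition Nb (C : 'M[R]_7) (b : vec) : 'M[R]_(7 + 1) := block_mx C b (- b^T) 0.

Lemma lin_1 (y z : vec) : forall k U U', phi_std (k *: U + U') y z = k * phi_std U y z + phi_std U' y z.
Proof. by case: (@phi_lin3 R). Qed.
Lemma lin_2 (x z : vec) : forall k U U', phi_std x (k *: U + U') z = k * phi_std x U z + phi_std x U' z.
Proof. by case: (@phi_lin3 R) => _ h _ k U U'; apply: h. Qed.
Lemma lin_3 (x y : vec) : forall k U U', phi_std x y (k *: U + U') = k * phi_std x y U + phi_std x y U'.
Proof. by case: (@phi_lin3 R) => _ _ h k U U'; apply: h. Qed.

Lemma phi_v_dl (v : vec) (a b : 'I_7) : phi_std v (dl a) (dl b) = phx (xn v) a b.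
Proof.
rewrite {1}(vec_sum v) (linsum (f := fun U => phi_std U (dl a) (dl b))); last exact: lin_1.
under eq_bigr do rewrite phi_dl.
by rewrite !big_ord_recl big_ord0 !W_xn /= /phx; ring.
Qed.

Lemma mx_entry (A : 'M[R]_7) (a b : 'I_7) : A a b = ((dl a)^T *m A *m dl b) ord0 ord0.
Proof.
rewrite [RHS]mxE (eq_bigr (fun j => ((dl a)^T *m A) ord0 j * dl b j ord0)) // dl_sum mxE.
by rewrite (eq_bigr (fun i => A i b * dl a i ord0)) ?dl_sum // => i _; rewrite mxE mulrC.
Qed.

Lemma phi_lin3_sum (v : vec) (a : 'I_7) (z : vec) :
  phi_std v (dl a) z = \sum_(b < 7) z b ord0 * phi_std v (dl a) (dl b).
Proof.
by rewrite {1}(vec_sum z) (linsum (f := fun U => phi_std v (dl a) U)) //; exact: lin_3.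
Qed.

Lemma phi_bil (v y z : vec) : phi_std v y z = (y^T *m Cm v *m z) ord0 ord0.
Proof.
rewrite {1}(vec_sum y) (linsum (f := fun U => phi_std v U z)); last exact: lin_2.
under eq_bigr do rewrite phi_lin3_sum mulr_sumr.
rewrite exchange_big mxE; apply: eq_bigr => b _; rewrite mxE mulr_suml; apply: eq_bigr => a _.
by rewrite !mxE; ring.
Qed.

Lemma Cm_cov (M : 'M[R]_7) :
  (forall x y z : vec, phi_std (M *m x) (M *m y) (M *m z) = phi_std x y z) ->
  forall u, M^T *m Cm (M *m u) *m M = Cm u.
Proof.
move=> hM u; apply/matrixP => a b.
rewrite mx_entry [in RHS]mxE -(hM u (dl a) (dl b)) phi_bil.
by rewrite trmx_mul !mulmxA.
Qed.

Lemma C_skew (v : vec) : (Cm v)^T = - Cm v.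
Proof.
by apply/matrixP => a b; rewrite !mxE; case: (phi_alt v (dl a) (dl b)) => _ -> _ _.
Qed.

Lemma C_v (v : vec) : Cm v *m v = 0.
Proof.
apply/matrixP => a j; rewrite (ord1 j) !mxE.
rewrite (eq_bigr (fun b => v b ord0 * phi_std v (dl a) (dl b))) => [|b _]; last by rewrite mxE mulrC.
rewrite -phi_lin3_sum.
by case: (phi_alt v v (dl a)) => _ -> -> _; rewrite oppr0.
Qed.

Lemma nvE (v : vec) : nv v = nE (xn v).
Proof. by rewrite /nv mxE !big_ord_recl big_ord0 /= !mxE !W_xn /= /nE; ring. Qed.

Lemma C_sq (v : vec) : Cm v *m Cm v = v *m v^T - (nv v)%:M.
Proof.
apply/matrixP => a c; rewrite !mxE nvE.
under eq_bigr do rewrite !mxE !phi_v_dl.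
rewrite big_ord1 !mxE !big_ord_recl big_ord0 !W_xn /=.
case: a => [[|[|[|[|[|[|[|a]]]]]]] ha] //; case: c => [[|[|[|[|[|[|[|c]]]]]]] hc] //=;
  rewrite /phx /nE /TZt /=; ring.
Qed.

End H.

Section I.
Variable R : realType.
Notation vec := (vec R).
Local Notation dl := (@dl R).
Local Notation Cm := (@Cm R).

Lemma dotC (x y : vec) : (x^T *m y) ord0 ord0 = (y^T *m x) ord0 ord0.
Proof. by rewrite !mxE; apply: eq_bigr => i _; rewrite !mxE mulrC. Qed.

Lemma Nb_mul (v b : vec) :
  Nb (Cm v) b *m block_mx (- Cm v) v (- v^T) 0 =
  block_mx ((nv v)%:M - (v + b) *m v^T) 0 (b^T *m Cm v) (- (b^T *m v)).
Proof.
rewrite /Nb mulmx_block C_v ?mulmx0 ?mul0mx ?addr0 !mulmxN !mulNmx opprK C_sq mulmxDl.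
by rewrite opprB opprD addrA.
Qed.

Lemma det_Nb_dual (v : vec) : \det (block_mx (- Cm v) v (- v^T) 0) = \det (Nb (Cm v) v).
Proof.
pose D : 'M[R]_(7 + 1) := block_mx 1%:M 0 0 (- 1%:M).
have -> : block_mx (- Cm v) v (- v^T) 0 = D *m (Nb (Cm v) v)^T *m D.
  rewrite /Nb tr_block_mx C_skew trmx0 linearN /= trmxK /D !mulmx_block.
  by rewrite ?mul1mx ?mulmx1 ?mul0mx ?mulmx0 ?addr0 ?add0r ?mulmxN ?mulNmx ?mulmx1 ?opprK ?mul1mx ?oppr0.
rewrite !det_mulmx det_tr /D det_ublock det1 mul1r det_mx11 !mxE /=.
by rewrite mulN1r mulrN1 opprK.
Qed.

Lemma det_Nb_prod (v b : vec) : nv v != 0 ->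
  \det (Nb (Cm v) b) * \det (Nb (Cm v) v) = nv v ^+ 6 * ((b^T *m v) ord0 ord0) ^+ 2.
Proof.
move=> hn; rewrite -det_Nb_dual -det_mulmx Nb_mul det_lblock det_nI_xy // det_mx11.
have e1 : (v^T *m (v + b)) ord0 ord0 = nv v + (b^T *m v) ord0 ord0.
  by rewrite mulmxDr [LHS]mxE dotC.
have e2 : (- (b^T *m v)) ord0 ord0 = - (b^T *m v) ord0 ord0 by rewrite mxE.
rewrite e1 e2; ring.
Qed.

Lemma det_Nb_sq (v b : vec) : nv v != 0 ->
  \det (Nb (Cm v) b) ^+ 2 = nv v ^+ 4 * ((b^T *m v) ord0 ord0) ^+ 4.
Proof.
move=> hn; have h1 := det_Nb_prod b hn; have h2 := det_Nb_prod v hn.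
rewrite -/(nv v) in h2.
have h2' : \det (Nb (Cm v) v) ^+ 2 = nv v ^+ 8 by rewrite expr2 h2; ring.
apply: (mulIf (expf_neq0 8 hn)) => /=; rewrite -{1}h2' -exprMn h1; ring.
Qed.

Lemma addE (A B : 'M[R]_1) : (A + B) ord0 ord0 = A ord0 ord0 + B ord0 ord0.
Proof. by rewrite mxE. Qed.

Lemma sym_zero (T : 'M[R]_7) : T^T = T -> (forall u : vec, (u^T *m T *m u) ord0 ord0 = 0) -> T = 0.
Proof.
move=> hT hq.
have sy : forall x y : vec, (y^T *m T *m x) ord0 ord0 = (x^T *m T *m y) ord0 ord0.
  move=> x y; have -> : (y^T *m T *m x) ord0 ord0 = ((y^T *m T *m x)^T) ord0 ord0 by rewrite [RHS]mxE.
  by rewrite !trmx_mul trmxK hT mulmxA.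
apply/matrixP => a b; rewrite (mx_entry T a b) [RHS]mxE.
have := hq (dl a + dl b); rewrite [(_ + _)^T]linearD /= !mulmxDl !mulmxDr !addE hq hq add0r addr0 sy.
rewrite -mulr2n -mulr_natr => /eqP; rewrite mulf_eq0 pnatr_eq0 orbF => /eqP.
by rewrite -mulmxA.
Qed.

Lemma nv_ge0 (u : vec) : 0 <= nv u.
Proof. by rewrite /nv mxE sumr_ge0 // => i _; rewrite mxE -expr2 sqr_ge0. Qed.

Lemma nv_eq0 (u : vec) : nv u = 0 -> u = 0.
Proof.
rewrite /nv mxE => /psumr_eq0P h; apply/matrixP => i j; rewrite (ord1 j) mxE.
have /eqP := h (fun i _ => ltac:(by rewrite mxE -expr2 sqr_ge0)) i isT.
by rewrite mxE -expr2 sqrf_eq0 => /eqP.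
Qed.

Lemma nv0 : nv (0 : vec) = 0.
Proof. by rewrite /nv trmx0 mul0mx mxE. Qed.

End I.

Section J.
Variable R : realType.
Notation vec := (vec R).
Local Notation dl := (@dl R).
Local Notation Cm := (@Cm R).

Lemma Nb_cov (M : 'M[R]_7) : M \in unitmx ->
  (forall x y z : vec, phi_std (M *m x) (M *m y) (M *m z) = phi_std x y z) ->
  forall u b : vec, \det (Nb (Cm u) b) = \det M ^+ 2 * \det (Nb (Cm (M *m u)) (invmx M^T *m b)).
Proof.
move=> hU hM u b.
pose E : 'M[R]_(7 + 1) := block_mx M 0 0 1%:M.
have hUt : M^T \in unitmx by rewrite unitmx_tr.
have -> : Nb (Cm u) b = E^T *m Nb (Cm (M *m u)) (invmx M^T *m b) *m E.
  rewrite /Nb /E tr_block_mx !trmx0 trmx1 !mulmx_block.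
  rewrite ?mul1mx ?mulmx1 ?mul0mx ?mulmx0 ?addr0 ?add0r.
  rewrite (Cm_cov hM) mulmxA mulmxV // mul1mx ?mulNmx trmx_mul trmx_inv trmxK -mulmxA mulVmx // mulmx1.
  by [].
rewrite !det_mulmx det_tr /E det_ublock det1 mulr1; ring.
Qed.

Lemma stab_orth (M : 'M[R]_7) : M \in unitmx ->
  (forall x y z : vec, phi_std (M *m x) (M *m y) (M *m z) = phi_std x y z) ->
  M^T *m M = 1%:M.
Proof.
move=> hU hM.
set d := `|\det M|.
have hd0 : \det M != 0 by rewrite -unitfE -unitmxE.
have hd : 0 < d by rewrite normr_gt0.
have d2 : d ^+ 2 = \det M ^+ 2 by rewrite /d real_normK ?num_real.
have key : forall u : vec, nv u = d * nv (M *m u).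
  move=> u; case: (eqVneq (nv u) 0) => hu.
    by rewrite (nv_eq0 hu) mulmx0 nv0 mulr0.
  have hMu : nv (M *m u) != 0.
    apply/eqP => /nv_eq0 h0; move/eqP: hu; apply.
    by rewrite -[u]mul1mx -(mulVmx hU) -mulmxA h0 mulmx0 nv0.
  have e := Nb_cov hU hM u u.
  have s1 := det_Nb_sq u hu; rewrite -/(nv u) in s1.
  have s2 := det_Nb_sq (invmx M^T *m u) hMu.
  have eb : ((invmx M^T *m u)^T *m (M *m u)) ord0 ord0 = nv u.
    by rewrite trmx_mul trmx_inv trmxK !mulmxA -[_ *m invmx M *m M]mulmxA mulVmx // mulmx1.
  rewrite eb in s2.
  have : nv u ^+ 4 * nv u ^+ 4 = (d * nv (M *m u)) ^+ 4 * nv u ^+ 4.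
    rewrite -s1 e exprMn s2 -exprM.
    have -> : \det M ^+ (2 * 2) = (d ^+ 2) ^+ 2 by rewrite d2 -exprM.
    ring.
  move/(mulIf (expf_neq0 4 hu))/eqP; rewrite eqrXn2 //; first by move/eqP.
    exact: nv_ge0.
  by rewrite mulr_ge0 ?nv_ge0 // ltW.
pose T := d *: (M^T *m M) - 1%:M.
have hT : T = 0.
  apply: sym_zero.
    by rewrite /T linearB /= linearZ /= trmx_mul trmxK trmx1.
  move=> u.
  have nvM : nv (M *m u) = (u^T *m (M^T *m M) *m u) ord0 ord0 by rewrite /nv trmx_mul !mulmxA.
  have subE : forall A B : 'M[R]_1, (A - B) ord0 ord0 = A ord0 ord0 - B ord0 ord0 by move=> A B; rewrite !mxE.
  have scE : forall k (A : 'M[R]_1), (k *: A) ord0 ord0 = k * A ord0 ord0 by move=> k A; rewrite mxE.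
  rewrite /T mulmxBr mulmxBl mulmx1 -scalemxAr -scalemxAl subE scE.
  by rewrite -nvM -/(nv u) (key u) subrr.
have hS : M^T *m M = d^-1 *: 1%:M.
  by move/eqP: hT; rewrite subr_eq0 => /eqP <-; rewrite scalerA mulVf ?gt_eqF // scale1r.
have hd1 : d = 1.
  have := congr1 determinant hS; rewrite det_mulmx det_tr detZ det1 mulr1.
  rewrite -expr2 -d2 => /(congr1 (fun x => x * d ^+ 7)); rewrite -exprMn mulVf ?gt_eqF //.
  rewrite expr1n -exprD => /eqP; rewrite pexpr_eq1 ?ltW // => /eqP.
  done.
by rewrite hS hd1 invr1 scale1r.
Qed.
End J.

Section K.
Variable R : realType.
Notation vec := (vec R).

Lemma A0tA0 al be ga (W : vec) :
  (A0m al be ga W)^T *m A0m al be ga W =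
  (al ^+ 2 + ga ^+ 2 * nE (xn W)) *: 1%:M
  + (2 * al * be + be ^+ 2 * nE (xn W) - ga ^+ 2) *: (W *m W^T).
Proof.
apply/matrixP => i j; rewrite !mxE big_ord1 !mxE.
under eq_bigr do rewrite !mxE.
rewrite !big_ord_recl big_ord0 !W_xn /=.
case: i => [[|[|[|[|[|[|[|i]]]]]]] hi] //; case: j => [[|[|[|[|[|[|[|j]]]]]]] hj] //=;
  rewrite /a0f /crE /nE /TZt /=; ring.
Qed.
End K.

From mathcomp Require Import polyrcf.

Section L.
Variable R : realType.

Lemma cube_powR (a : R) : 0 <= a -> (a `^ (3%:R^-1)) ^+ 3 = a.
Proof.
move=> ha; rewrite -powR_mulrn ?powR_ge0 // -powRrM mulVf ?pnatr_eq0 //.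
by rewrite powRr1.
Qed.

Lemma exists_alga (n : R) : 0 <= n ->
  exists al ga : R, al ^+ 3 - 3 * al * ga ^+ 2 * n = 1 /\ 3 * al ^+ 2 * ga - ga ^+ 3 * n = 1.
Proof.
move=> hn.
pose s := Num.sqrt (3 * n + 9).
have hs2 : s ^+ 2 = 3 * n + 9 by rewrite sqr_sqrtr // addr_ge0 ?mulr_ge0.
have hs3 : 3 <= s.
  rewrite -(@ler_pXn2r _ 2) ?nnegrE ?sqrtr_ge0 // hs2.
  by rewrite expr2; lra.
have hs0 : 0 < s by apply: lt_le_trans hs3.
pose f : {poly R} := n%:P * 'X^3 - (3 * n)%:P * 'X^2 - 3%:P * 'X + 1.
have fE : forall k, f.[k] = 1 - 3 * k - 3 * n * k ^+ 2 + n * k ^+ 3.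
  by move=> k; rewrite /f !hornerE; ring.
have f1 : f.[s^-1] <= 0.
  have -> : f.[s^-1] = - ((8 * s - 3) * (s - 3)) / (3 * s ^+ 3).
    have hn' : n = (s ^+ 2 - 9) / 3 by rewrite hs2; field.
    rewrite fE hn'; field; rewrite ?pnatr_eq0 ?expf_neq0 // gt_eqF //.
  rewrite mulNr oppr_le0; apply: divr_ge0; first by apply: mulr_ge0; lra.
  by apply: mulr_ge0; [lra | apply: exprn_ge0; lra].
have hsi : 0 <= s^-1 by rewrite invr_ge0 ltW.
have [k hk rk] := poly_ivt hsi (ltac:(by rewrite (fE 0); nra) : f.[0] * f.[s^-1] <= 0).
move: hk; rewrite in_itv /= => /andP [hk0 hk1].
have rk' : 1 - 3 * k - 3 * n * k ^+ 2 + n * k ^+ 3 = 0 by rewrite -fE; apply/eqP.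
have hks : k * s <= 1.
  by rewrite -(mulVf (lt0r_neq0 hs0)) ler_wpM2r // ltW.
have hpos : 0 < 1 - 3 * k ^+ 2 * n.
  have [->|kn0] := eqVneq k 0; first by nra.
  have kp : 0 < k by rewrite lt_neqAle eq_sym kn0 hk0.
  have hks0 : 0 <= k * s by rewrite mulr_ge0 // ltW.
  have : k ^+ 2 * s ^+ 2 <= 1 by nra.
  rewrite hs2; nra.
pose al := (1 - 3 * k ^+ 2 * n)^-1 `^ (3%:R^-1).
have al3 : al ^+ 3 = (1 - 3 * k ^+ 2 * n)^-1 by rewrite cube_powR // invr_ge0 ltW.
exists al, (k * al); split.
  have -> : al ^+ 3 - 3 * al * (k * al) ^+ 2 * n = al ^+ 3 * (1 - 3 * k ^+ 2 * n) by ring.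
  by rewrite al3 mulVf // lt0r_neq0.
have -> : 3 * al ^+ 2 * (k * al) - (k * al) ^+ 3 * n = al ^+ 3 * (3 * k - k ^+ 3 * n) by ring.
have -> : 3 * k - k ^+ 3 * n = 1 - 3 * k ^+ 2 * n.
  by move: rk'; lra.
by rewrite al3 mulVf // lt0r_neq0.
Qed.
End L.

Lemma inv_uniq (R : realType) (X Y : 'M[R]_7) : X *m Y = 1%:M -> invmx X = Y.
Proof.
move=> h; have [hX _] := mulmx1_unit h.
by rewrite -[invmx X]mulmx1 -h mulmxA mulVmx // mul1mx.
Qed.

Unset Implicit Arguments.
Theorem mainTheorem14 (R : realType) (phi_o : form3 R) (P : 'M[R]_7) (w : vec R) :
  adapted phi_o P ->
  let phit := add3 phi_o (contr4 w (hodge3 P phi_o)) in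
  let g_o := metric_mx P in
  is_G2 phit /\
  forall Pt : 'M[R]_7, adapted phit Pt ->
    invmx (metric_mx Pt) =
      ((1 + (w^T *m g_o *m w) ord0 ord0) `^ (3%:R)^-1)^-1 *: (invmx g_o + w *m w^T).
Proof.
move=> hP phit g_o.
case: (hP) => hPu hphi.
set W := P *m w.
set n := nE (xn W).
have hn0 : 0 <= n by rewrite /n -nvE nv_ge0.
have [al [ga [h1 h2]]] := exists_alga hn0.
set p := al ^+ 2 + ga ^+ 2 * n.
have hal : al != 0.
  apply/eqP => a0; move: h1; rewrite a0 => h; have : (0 : R) = 1 by rewrite -h; ring.
  by move/eqP; rewrite eq_sym oner_eq0.
have a2 : 0 < al ^+ 2 by rewrite lt_neqAle sqr_ge0 andbT eq_sym sqrf_eq0.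
have hp : 0 < p by rewrite /p; have := mulr_ge0 (sqr_ge0 ga) hn0; lra.
have hp0 : p != 0 by exact: lt0r_neq0.
set be := - 4 * al * ga ^+ 2 / p.
have h3 : a3E al be ga (xn W) = 0.
  by rewrite /a3E -/n -/p /be; field.
have h1' : a1E al be ga (xn W) = 1 by rewrite /a1E -/n.
have h2' : a2E al be ga (xn W) = 1 by rewrite /a2E -/n.
set A := A0m al be ga W.
have pull := A0_pullback h1' h2' h3.
set q := 2 * al * be + be ^+ 2 * n - ga ^+ 2.
have K : A^T *m A = p *: 1%:M + q *: (W *m W^T) by rewrite /A A0tA0.
have hq : p + q * (1 + n) = 0.
  have hbp : be * p = - 4 * al * ga ^+ 2 by rewrite /be; field.
  have e : p ^+ 2 * (p + q * (1 + n)) = 0.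
    transitivity (p ^+ 3 + (1 + n) * (2 * al * p * (be * p) + n * (be * p) ^+ 2 - ga ^+ 2 * p ^+ 2)).
      by rewrite /q; ring.
    rewrite hbp; transitivity (a1E al be ga (xn W) ^+ 2 - a2E al be ga (xn W) ^+ 2).
      by rewrite /a1E /a2E -/n /p; ring.
    by rewrite h1' h2' subrr.
  by move/eqP: e; rewrite mulf_eq0 expf_eq0 /= (negbTE hp0) => /eqP.
have WW : (W *m W^T) *m (W *m W^T) = n *: (W *m W^T).
  rewrite mulmxA -(mulmxA W) (mx11_scalar (W^T *m W)) mul_mx_scalar -scalemxAl.
  by rewrite -/(nv W) nvE.
have KW : A^T *m A *m (1%:M + W *m W^T) = p *: 1%:M.
  have -> : A^T *m A *m (1%:M + W *m W^T) = p *: 1%:M + (p + q * (1 + n)) *: (W *m W^T).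
    rewrite K mulmxDr mulmx1 mulmxDl -!scalemxAl mul1mx WW.
    by apply/matrixP => i j; rewrite !mxE; ring.
  by rewrite hq scale0r addr0.
have hAu : A \in unitmx.
  have : (A^T *m A) *m (p^-1 *: (1%:M + W *m W^T)) = 1%:M.
    by rewrite -scalemxAr KW scalerA mulVf // scale1r.
  by case/mulmx1_unit => /[swap] _; rewrite unitmx_mul => /andP [].
pose Pt0 := A *m P.
have hPt0 : Pt0 \in unitmx by rewrite unitmx_mul hAu.
have ad0 : adapted phit Pt0.
  split=> // u v x.
  rewrite /phit /add3 /contr4 (hodgeE _ _ _ _ hP) hphi /Pt0 -!mulmxA pull.
  by [].
split; first by exists Pt0.
move=> Pt [hPt hphit].
pose M := Pt *m invmx Pt0.
have hMu : M \in unitmx by rewrite unitmx_mul hPt unitmx_inv.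
have hM : forall x y z : vec R, phi_std (M *m x) (M *m y) (M *m z) = phi_std x y z.
  move=> x y z; rewrite /M -!mulmxA -hphit.
  case: ad0 => _ ->; by rewrite !(mulKVmx hPt0).
have hO := stab_orth hMu hM.
have hPt' : Pt = M *m Pt0 by rewrite /M mulmxKV.
clearbody M.
have met : metric_mx Pt = P^T *m (A^T *m A) *m P.
  rewrite /metric_mx hPt' trmx_mul !mulmxA -(mulmxA _ M^T M) hO mulmx1 /Pt0 trmx_mul.
  by rewrite ?mulmxA.
have dot : (w^T *m g_o *m w) ord0 ord0 = n.
  by rewrite /g_o /metric_mx /n -nvE /nv /W trmx_mul !mulmxA.
have hPtu : P^T \in unitmx by rewrite unitmx_tr.
have wE : w = invmx P *m W by rewrite /W mulKmx.
have Y : invmx g_o + w *m w^T = invmx P *m (1%:M + W *m W^T) *m invmx P^T.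
  have gi : invmx g_o = invmx P *m invmx P^T.
    apply: inv_uniq; rewrite /g_o /metric_mx -mulmxA (mulmxA P) mulmxV // mul1mx mulmxV //.
  have ww : w *m w^T = invmx P *m (W *m W^T) *m invmx P^T.
    by rewrite [in LHS]wE trmx_mul trmx_inv !mulmxA.
  by rewrite gi ww mulmxDr mulmxDl mulmx1.
have pc : p = (1 + n) `^ (3%:R^-1).
  have p3 : p ^+ 3 = 1 + n.
    transitivity (a1E al be ga (xn W) ^+ 2 + n * a2E al be ga (xn W) ^+ 2).
      by rewrite /a1E /a2E -/n /p; ring.
    by rewrite h1' h2'; ring.
  have hn1 : 0 <= 1 + n by lra.
  apply/eqP; rewrite -(@eqrXn2 _ 3) // ?powR_ge0 ?ltW //.
  by apply/eqP; exact: (etrans p3 (esym (cube_powR hn1))).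
rewrite met dot Y -pc; apply: inv_uniq; rewrite -scalemxAr.
have -> : P^T *m (A^T *m A) *m P *m (invmx P *m (1%:M + W *m W^T) *m invmx P^T)
    = P^T *m (A^T *m A *m (1%:M + W *m W^T)) *m invmx P^T by rewrite !mulmxA (mulmxK hPu).
rewrite KW -scalemxAr mulmx1 -scalemxAl mulmxV // scalerA mulVf // scale1r.
by [].
Qed.
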